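(* Let $V$ be a real symmetric positive definite $2n\times2n$ matrix and let $\nu_{\min}(V)$ be its smallest symplectic eigenvalue. Then $$\nu_{\min}(V)=\max\{\lambda\ge0: V\ge i\lambda\Omega\}=\min\{\mathrm{Tr}(WV): W\ \text{a }2n\times2n\text{ complex Hermitian matrix},\ W\ge0,\ \mathrm{Tr}(W\,i\Omega)=1\}.$$
   Context: $\Omega=\begin{pmatrix}0&\mathbb 1_n\\-\mathbb 1_n&0\end{pmatrix}$. By Williamson's theorem, for every real symmetric positive definite $2n\times2n$ matrix $V$ there is a real matrix $S$ with $S\Omega S^T=\Omega$ (symplectic) such that $SVS^T=D\oplus D$ with $D=\mathrm{diag}(\nu_1(V),\dots,\nu_n(V))$, $\nu_j(V)>0$; the $\nu_j(V)$ are the symplectic eigenvalues of $V$. Matrix inequalities refer to the positive semidefinite (Löwner) order on Hermitian matrices. *)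

(* Defs.v *)
(* Complex numbers: an arbitrary numClosedFieldType C
   (e.g. the complex numbers); "real" = Num.real elements of C. *)
From HB Require Import structures.
From mathcomp Require Import all_boot all_order all_algebra.
From mathcomp Require Export sesquilinear spectral.
Set Implicit Arguments. Unset Strict Implicit. Unset Printing Implicit Defensive.
Import Order.TTheory GRing.Theory Num.Theory.
Local Open Scope ring_scope.
Local Open Scope sesquilinear_scope.

Section Defs.
Variable C : numClosedFieldType.

Definition Omega (n : nat) : 'M[C]_(n + n) :=
  block_mx 0 1%:M (- 1%:M) 0.

Definition real_mx m p (A : 'M[C]_(m, p)) : Prop := forall i j, A i j \is Num.real.

Definition real_sym_pd m (V : 'M[C]_m) : Prop :=
  real_mx V /\ V^T = V /\
  forall v : 'cV[C]_m, real_mx v -> v != 0 -> 0 < (v^T *m V *m v) 0 0.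

Definition hermitian_mx m (A : 'M[C]_m) : Prop := A ^t* = A.
Definition psd_mx m (A : 'M[C]_m) : Prop :=
  hermitian_mx A /\ forall v : 'cV[C]_m, 0 <= ((v ^t*) *m A *m v) 0 0.
Definition loewner_ge m (A B : 'M[C]_m) : Prop := psd_mx (A - B).

Definition symplectic n (S : 'M[C]_(n + n)) : Prop :=
  real_mx S /\ S *m Omega n *m S^T = Omega n.

(* d lists the symplectic eigenvalues of V (Williamson normal form):
   d_j > 0 and there is a real symplectic S with S V S^T = D (+) D. *)
Definition williamson n (V : 'M[C]_(n + n)) (d : 'rV[C]_n) : Prop :=
  (forall j, 0 < d 0 j) /\
  exists S, symplectic S /\
    S *m V *m S^T = block_mx (diag_mx d) 0 0 (diag_mx d).

Definition is_nu_min n (V : 'M[C]_(n + n)) (m : C) : Prop :=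
  exists d, williamson V d /\ (exists j, d 0 j = m) /\ (forall j, m <= d 0 j).

Definition is_max (P : C -> Prop) (m : C) : Prop := P m /\ forall x, P x -> x <= m.
Definition is_min (P : C -> Prop) (m : C) : Prop := P m /\ forall x, P x -> m <= x.

End Defs.

(* Main.v *)
Require Import Defs.
From HB Require Import structures.
From mathcomp Require Import all_boot all_order all_algebra.
From mathcomp Require Import sesquilinear spectral ring.
Import Order.TTheory GRing.Theory Num.Theory Num.Def.
Local Open Scope ring_scope.
Local Open Scope sesquilinear_scope.

Section Helpers.
Variable C : numClosedFieldType.

Definition sq {m} (A : 'M[C]_m) (v : 'cV[C]_m) : C := ((v ^t*) *m A *m v) 0 0.

Lemma sq_congr m p (S : 'M[C]_(p, m)) (A : 'M[C]_m) w :
  S ^ conjC = S -> sq A (S^T *m w) = sq (S *m A *m S^T) w.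
Proof. by move=> hS; rewrite /sq trmx_mul map_mxM trmxK hS !mulmxA. Qed.

Lemma sq_rowP m (P X : 'M[C]_m) i :
  (P *m X *m P^t*) i i = sq X ((row i P)^t*).
Proof.
rewrite /sq trmxCK -[in RHS]row_mul.
rewrite mxE; rewrite [RHS]mxE; apply: eq_bigr => k _.
by rewrite !mxE.
Qed.

Lemma trace_psd m (W A : 'M[C]_m) : psd_mx W -> psd_mx A -> 0 <= \tr (W *m A).
Proof.
move=> [hW pW] [_ pA].
have Wn : W \is normalmx by rewrite qualifE /= hW.
move/orthomx_spectralP: Wn.
set P := spectralmx W; set e := spectral_diag W => Weq.
have Pu : P \is unitarymx := spectral_unitarymx W.
rewrite invmx_unitary // in Weq.
have PP : P *m P^t* = 1%:M by apply/unitarymxP.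
have he : forall i, 0 <= e 0 i.
  move=> i.
  have : (P *m W *m P^t*) i i = e 0 i.
    rewrite Weq !mulmxA PP mul1mx -!mulmxA PP mulmx1.
    by rewrite mxE eqxx mulr1n.
  by move=> <-; rewrite sq_rowP; apply: pW.
rewrite Weq -!mulmxA mxtrace_mulC -!mulmxA mul_diag_mx /mxtrace.
apply: sumr_ge0 => i _; rewrite mxE; apply: mulr_ge0 => //.
rewrite !mulmxA (sq_rowP _ P A i); exact: pA.
Qed.

Lemma sqB m (A B : 'M[C]_m) c v : sq (A - c *: B) v = sq A v - c * sq B v.
Proof. by rewrite /sq mulmxBr mulmxBl -scalemxAr -scalemxAl !mxE. Qed.

Lemma sqZ m (A : 'M[C]_m) c v : sq (c *: A) v = c * sq A v.
Proof. by rewrite /sq -scalemxAr -scalemxAl !mxE. Qed.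

Lemma sq_block n (x y : 'cV[C]_n) (P Q R T : 'M[C]_n) :
  sq (block_mx P Q R T) (col_mx x y) =
  (x^t* *m P *m x) 0 0 + (y^t* *m R *m x) 0 0 +
  ((x^t* *m Q *m y) 0 0 + (y^t* *m T *m y) 0 0).
Proof.
by rewrite /sq tr_col_mx map_row_mx mul_row_block mul_row_col !mulmxDl !mxE.
Qed.

Lemma ent_diag n (x y : 'cV[C]_n) d :
  (x^t* *m diag_mx d *m y) 0 0 = \sum_j (x j 0)^* * (d 0 j * y j 0).
Proof.
rewrite -mulmxA mul_diag_mx mxE; apply: eq_bigr => j _; by rewrite !mxE.
Qed.

Lemma ent_1 n (x y : 'cV[C]_n) :
  (x^t* *m 1%:M *m y) 0 0 = \sum_j (x j 0)^* * y j 0.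
Proof. rewrite mulmx1 mxE; apply: eq_bigr => j _; by rewrite !mxE. Qed.

Lemma ent_0 n (x y : 'cV[C]_n) : (x^t* *m 0 *m y) 0 0 = 0.
Proof. by rewrite mulmx0 mul0mx mxE. Qed.

Lemma ent_N1 n (x y : 'cV[C]_n) :
  (x^t* *m (- 1%:M) *m y) 0 0 = - \sum_j (x j 0)^* * y j 0.
Proof. by rewrite mulmxN mulNmx mxE ent_1. Qed.

Lemma sq_blockD n (x y : 'cV[C]_n) d :
  sq (block_mx (diag_mx d) 0 0 (diag_mx d)) (col_mx x y) =
  \sum_j d 0 j * ((x j 0)^* * x j 0 + (y j 0)^* * y j 0).
Proof.
rewrite sq_block !ent_diag !ent_0 add0r addr0 -big_split /=.
by apply: eq_bigr => j _; ring.
Qed.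

Lemma sq_Omega n (x y : 'cV[C]_n) :
  sq (Omega C n) (col_mx x y) =
  \sum_j ((x j 0)^* * y j 0 - (y j 0)^* * x j 0).
Proof.
rewrite /Omega sq_block ent_1 ent_N1 !ent_0 add0r addr0 sumrB addrC //.
Qed.

Lemma ii : 'i * 'i = -1 :> C.
Proof. by rewrite -expr2 sqrCi. Qed.

Lemma by_ii (x y k : C) : x - y = k * ('i * 'i + 1) -> x = y.
Proof. by move=> h; apply/eqP; rewrite -subr_eq0 h ii addNr mulr0. Qed.

Lemma term_ge0 (a b dd nu : C) : 0 <= nu -> nu <= dd ->
  0 <= dd * (a^* * a + b^* * b) - 'i * nu * (a^* * b - b^* * a).
Proof.
move=> h0 h1.
have -> : dd * (a^* * a + b^* * b) - 'i * nu * (a^* * b - b^* * a) =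
   (dd - nu) * (a * a^* + b * b^*) + nu * ((a - 'i * b) * (a - 'i * b)^*).
  apply/eqP; rewrite -subr_eq0; apply/eqP.
  rewrite rmorphB rmorphM /= (conjCi C).
  transitivity (nu * b * b^* * ('i * 'i + 1)); first by ring.
  by rewrite ii addNr mulr0.
apply: addr_ge0; last by apply: mulr_ge0 => //; exact: mul_conjC_ge0.
apply: mulr_ge0; first by rewrite subr_ge0.
by apply: addr_ge0; exact: mul_conjC_ge0.
Qed.

End Helpers.
Arguments sq {C m}.

Theorem propositionA6 (C : numClosedFieldType) (n : nat)
  (V : 'M[C]_(n + n)) (numin : C) :
  real_sym_pd V ->
  is_nu_min V numin ->
  is_max (fun lam : C => 0 <= lam /\ loewner_ge V ('i * lam *: Omega C n)) numin /\
  is_min (fun t : C => exists W : 'M[C]_(n + n),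
            psd_mx W /\ \tr (W *m ('i *: Omega C n)) = 1 /\ t = \tr (W *m V))
         numin.
Proof.
move=> [Vr [Vt Vpd]] [d [[dpos [S [[Sr SO] SV]]] [[j0 dj0] dmin]]].
set Om := Omega C n in SO *.
set B := block_mx (diag_mx d) 0 0 (diag_mx d).
have hSc : S ^ conjC = S by apply/matrixP => i j; rewrite mxE; apply/CrealP; apply: Sr.
have hVc : V ^ conjC = V by apply/matrixP => i j; rewrite mxE; apply/CrealP; apply: Vr.
have nu0 : 0 <= numin by rewrite -dj0; apply: ltW.
have nuR : numin \is Num.real by apply: ger0_real.
have OO : Om *m Om = - 1%:M.
  rewrite /Om /Omega mulmx_block !mulmx0 !mul0mx !mulmx1 !mul1mx.
  rewrite !addr0 !add0r.
  by rewrite [in RHS](scalar_mx_block n n (1 : C)) opp_block_mx oppr0.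
set Sinv := - (Om *m S^T *m Om).
have SSi : S *m Sinv = 1%:M by rewrite /Sinv mulmxN !mulmxA SO OO opprK.
have SiS : Sinv *m S = 1%:M := mulmx1C SSi.
have StSi : S^T *m Sinv^T = 1%:M by rewrite -trmx_mul SiS trmx1.
have key : forall c, S *m (V - c *: Om) *m S^T = B - c *: Om.
  by move=> c; rewrite mulmxBr mulmxBl -scalemxAr -scalemxAl SV SO.
have OT : Om^t* = - Om.
  rewrite /Om /Omega tr_block_mx !trmx0 trmx1 linearN /= trmx1.
  by rewrite map_block_mx map_mx0 map_mxN map_mx1 opp_block_mx oppr0 opprK.
set e : 'cV[C]_n := delta_mx j0 0.
set u := col_mx e (- 'i *: e).
have sqBu : sq B u = 2 * numin.
  rewrite /u sq_blockD (bigD1 j0) //= big1 => [|j hj]; last first.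
    by rewrite !mxE (negbTE hj) /= !(mulr0, conjC0, mul0r, addr0).
  rewrite !mxE eqxx /= addr0 dj0 !mulr1 rmorphN /= (conjCi C) rmorph1.
  by apply: (@by_ii _ _ _ (- numin)); ring.
have sqOu : sq Om u = - (2 * 'i).
  rewrite /u sq_Omega (bigD1 j0) //= big1 => [|j hj]; last first.
    by rewrite !mxE (negbTE hj) /= !(mulr0, conjC0, mul0r, addr0, subr0).
  rewrite !mxE eqxx /= addr0 !mulr1 rmorphN /= (conjCi C) rmorph1.
  ring.
have psdnu : psd_mx (V - ('i * numin) *: Om).
  split.
    rewrite /hermitian_mx linearB /= linearZ /= map_mxB map_mxZ /=.
    rewrite Vt hVc OT rmorphM /= (conjCi C) (conj_Creal nuR).
    by rewrite scalerN mulNr scaleNr opprK.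
  move=> v; have -> : v = S^T *m (Sinv^T *m v) by rewrite mulmxA StSi mul1mx.
  change (0 <= sq (V - ('i * numin) *: Om) (S^T *m (Sinv^T *m v))).
  rewrite sq_congr // key; set w := Sinv^T *m v.
  rewrite -(vsubmxK w) sqB sq_blockD sq_Omega mulr_sumr -sumrB.
  apply: sumr_ge0 => j _; exact: term_ge0 (dmin j).
split.
  split; first by split.
  move=> lam [lam0 plam]; have := (proj2 plam) (S^T *m u).
  change (0 <= sq (V - ('i * lam) *: Om) (S^T *m u) -> lam <= numin).
  rewrite sq_congr // key sqB sqBu sqOu.
  have -> : 2 * numin - 'i * lam * - (2 * 'i) = 2 * (numin - lam).
    by apply: (@by_ii _ _ _ (2 * lam)); ring.
  by rewrite pmulr_rge0 // subr_ge0.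
have two0 : (2 : C) != 0 by rewrite pnatr_eq0.
have hR : (2 : C)^-1 \is Num.real by apply: ger0_real; rewrite invr_ge0 ler0n.
split.
  set y := S^T *m u.
  set W := (2 : C)^-1 *: (y *m y^t*).
  have trW : forall X, \tr (W *m X) = 2^-1 * sq X y.
    move=> X; rewrite /W -scalemxAl mxtraceZ -mulmxA mxtrace_mulC trace_mx11.
    by [].
  exists W; split; [|split].
  - split.
      rewrite /hermitian_mx /W linearZ /= map_mxZ trmx_mul map_mxM trmxCK.
      by rewrite /= (conj_Creal hR).
    move=> v; change (0 <= sq W v); rewrite /W sqZ.
    apply: mulr_ge0; first by rewrite invr_ge0 ler0n.
    have -> : sq (y *m y^t*) v = (v^t* *m y) 0 0 * ((v^t* *m y) 0 0)^*.
      rewrite /sq (mulmxA (v^t*) y (y^t*)) -(mulmxA (v^t* *m y) (y^t*) v) mxE big_ord1; congr (_ * _).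
      rewrite !mxE rmorph_sum; apply: eq_bigr => k _.
      by rewrite !mxE rmorphM /= conjCK mulrC.
    exact: mul_conjC_ge0.
  - rewrite trW /y sq_congr // -scalemxAr -scalemxAl SO sqZ sqOu.
    have -> : 'i * - (2 * 'i) = 2 :> C by apply: (@by_ii _ _ _ (-2)); ring.
    by rewrite mulVf.
  - by rewrite trW /y sq_congr // SV -/B sqBu mulrA mulVf ?mul1r.
move=> t [W [pW [tW ->]]].
have := @trace_psd C _ _ _ pW psdnu.
rewrite (_ : ('i * numin) *: Om = numin *: ('i *: Om)); last by rewrite scalerA mulrC.
by rewrite mulmxBr linearB /= -scalemxAr mxtraceZ tW mulr1 subr_ge0.
Qed.
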